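(* Let $(M,\cdot,1)$ be a monoid, $\Sigma$ a finite alphabet and $L$ the set of all functions $\Sigma^*\to M$. Let $(g'_1,f'_1),\dots,(g'_n,f'_n)$, $n\ge0$, be factorizations on $L$ and let $r_1,\dots,r_n:\Sigma^*\to\Sigma^*$ be functions (word-transformations). For each $i$ put $(g_i,f_i)=(g'_i\circ\Delta_{r_i},\,f'_i\circ\Delta_{r_i})$. Let $(g,f)=(g_1,f_1)\ast\cdots\ast(g_n,f_n)$, i.e. $$g=\prod_{i=1}^n g_i\circ(f_{i-1}\circ\cdots\circ f_1),\qquad f=f_n\circ\cdots\circ f_1$$ (product taken in the order $i=1,\dots,n$). Then for every $\ell\in L$, $$g(\ell)\cdot f(\ell)=\Delta_{r_1\circ r_2\circ\cdots\circ r_n}(\ell)=\ell\circ r_1\circ r_2\circ\cdots\circ r_n,$$ where for $n=0$ the composite word-transformation is the identity (so the right side is $\ell$).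
   Context: Let $F$ be the set of functions $L\to L$ and $G$ the set of functions $L\to M$; for $g,g'\in G$, $(g\cdot g')(\ell)=g(\ell)\cdot g'(\ell)$, and an empty product in $G$ is the constant function $1$, an empty composition in $F$ is the identity. A factorization on $L$ is a pair $(g,f)\in G\times F$ with $g(\ell)\cdot f(\ell)=\ell$ for all $\ell\in L$. For a word-transformation $r:\Sigma^*\to\Sigma^*$, $\Delta_r\in F$ is defined by $\Delta_r(\ell)=\ell\circ r$. The operation $\ast$ on $G\times F$ is $(g_1,f_1)\ast(g_2,f_2)=(g_1\cdot(g_2\circ f_1),f_2\circ f_1)$. For $m\in M$ and $\ell\in L$, $m\cdot\ell$ is the $M$-language $\gamma\mapsto m\cdot\ell(\gamma)$. *)

(* Defs.v *)
From mathcomp Require Import all_boot.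
Set Implicit Arguments. Unset Strict Implicit. Unset Printing Implicit Defensive.

Section Factorizations.
(* A monoid (M, mul, one) given by explicit operations; axioms are passed as
   hypotheses of the theorem. Sigma is the alphabet, words are seq Sigma. *)
Variables (Sigma : finType) (M : Type) (mul : M -> M -> M) (one : M).

Definition lang := seq Sigma -> M.
Definition Gfun := lang -> M.
Definition Ffun := lang -> lang.

Definition lscale (m : M) (l : lang) : lang := fun w => mul m (l w).

Definition gmul (g1 g2 : Gfun) : Gfun := fun l => mul (g1 l) (g2 l).

Definition is_factorization (g : Gfun) (f : Ffun) : Prop :=
  forall l : lang, lscale (g l) (f l) = l.

Definition Delta (r : seq Sigma -> seq Sigma) : Ffun := fun l => l \o r.

Definition star (p1 p2 : Gfun * Ffun) : Gfun * Ffun :=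
  (gmul p1.1 (p2.1 \o p1.2), p2.2 \o p1.2).

Definition star_unit : Gfun * Ffun := (fun _ => one, id).

Definition star_big (n : nat) (p : nat -> Gfun * Ffun) : Gfun * Ffun :=
  foldr (fun i acc => star (p i) acc) star_unit (iota 0 n).

End Factorizations.

Definition comp_big (A : Type) (n : nat) (r : nat -> A -> A) : A -> A :=
  foldr (fun i acc => r i \o acc) id (iota 0 n).

(* Main.v *)
Require Import Defs.
From mathcomp Require Import all_boot.
From Stdlib Require Import FunctionalExtensionality.

Lemma gen (M : Type) (mul : M -> M -> M) (one : M)
  (mulA : associative mul) (mul1m : left_id one mul)
  (Sigma : finType)
  (g' : nat -> Gfun Sigma M) (f' : nat -> Ffun Sigma M)
  (r : nat -> seq Sigma -> seq Sigma) (k : nat) :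
  forall m, (forall i, m <= i < m + k -> is_factorization mul (g' i) (f' i)) ->
  let p := fun i => (g' i \o @Delta Sigma M (r i), f' i \o @Delta Sigma M (r i)) in
  let gf := foldr (fun i acc => @star Sigma M mul (p i) acc) (@star_unit Sigma M one) (iota m k) in
  forall (l : lang Sigma M) w,
    mul (gf.1 l) (gf.2 l w) = l (foldr (fun i acc => r i \o acc) id (iota m k) w).
Proof.
elim: k => [|k IH] m Hf p gf l w.
  by rewrite /gf /= mul1m.
rewrite /gf /= /gmul /= -mulA.
have := IH m.+1 _ (f' m (Delta (r m) l)) w.
rewrite /= => ->; last first.
  by move=> i /andP [H1 H2]; apply: Hf; rewrite (ltnW H1) -addSnnS.
have := Hf m; rewrite leqnn addnS ltnS leq_addr => /(_ isT) Hm.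
have := congr1 (fun h => h (foldr (fun i acc => r i \o acc) id (iota m.+1 k) w)) (Hm (Delta (r m) l)).
by rewrite /lscale /Delta /=.
Qed.

(* Indices i = 1..n of the paper are 0..n-1 here. *)
Theorem lemma2 (M : Type) (mul : M -> M -> M) (one : M)
  (mulA : associative mul) (mul1m : left_id one mul) (mulm1 : right_id one mul)
  (Sigma : finType) (n : nat)
  (g' : nat -> Gfun Sigma M) (f' : nat -> Ffun Sigma M)
  (r : nat -> seq Sigma -> seq Sigma) :
  (forall i, i < n -> is_factorization mul (g' i) (f' i)) ->
  let p := fun i => (g' i \o @Delta Sigma M (r i), f' i \o @Delta Sigma M (r i)) in
  let gf := star_big mul one n p in
  forall l : lang Sigma M,
    lscale mul (gf.1 l) (gf.2 l) = @Delta Sigma M (comp_big n r) l.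
Proof.
move=> Hf p gf l; apply: functional_extensionality => w.
rewrite /lscale /Delta /comp_big /gf /star_big.
have := @gen M mul one mulA mul1m Sigma g' f' r n 0 (fun i H => Hf i (andP H).2) l w.
by [].
Qed.
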